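(* Let $G=(V,E)$ be a connected graph with positive edge costs $c:E\to\mathbb{R}_+$, let $\alpha\ge1$, and let $(U,\complement{U})$ be an $\alpha$-approximate minimum cut of $G$. Then there exists a subset $T\subseteq\complement{U}$ with $|T|\le\lfloor2\alpha\rfloor+1$ such that $(U,\complement{U})$ is the unique minimum $(U,T)$-terminal cut.
   Context: A cut is a partition of $V$ into two non-empty parts; for $\emptyset\ne U\subsetneq V$ write $\complement{U}=V\setminus U$ and $d(U)$ for the total cost of edges with exactly one endpoint in $U$. Let $\lambda=\min\{d(U):\emptyset\ne U\subsetneq V\}$; $(U,\complement{U})$ is an $\alpha$-approximate minimum cut if $d(U)\le\alpha\lambda$. For disjoint non-empty $S,T\subseteq V$, a cut $(X,\complement{X})$ is an $(S,T)$-terminal cut if $S\subseteq X\subseteq V\setminus T$; a minimum $(S,T)$-terminal cut is one minimizing $d(X)$ among these. *)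

(* Defs.v *)
From HB Require Import structures.
From mathcomp Require Import all_boot all_order all_algebra.
From mathcomp Require Import reals.
Set Implicit Arguments. Unset Strict Implicit. Unset Printing Implicit Defensive.
Import Order.TTheory GRing.Theory Num.Theory.
Local Open Scope ring_scope.

Section Cuts.
Variables (R : realType) (V : finType) (e : rel V) (c : V -> V -> R).

Definition simple_graph := symmetric e /\ irreflexive e.
Definition positive_costs :=
  (forall x y, c x y = c y x) /\ (forall x y, e x y -> 0 < c x y).
Definition connected_graph := forall x y : V, connect e x y.

(* d(U): total cost of edges with exactly one endpoint in U
   (each undirected edge counted once, as the ordered pair (inside, outside)). *)
Definition dcut (U : {set V}) : R :=
  \sum_(x in U) \sum_(y in ~: U | e x y) c x y.

Definition is_cut (U : {set V}) : bool := (U != set0) && (U != setT).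

Definition is_min_cut_value (lam : R) :=
  (exists2 W, is_cut W & dcut W = lam) /\ (forall W, is_cut W -> lam <= dcut W).

Definition approx_min_cut (alpha : R) (U : {set V}) :=
  is_cut U /\ exists2 lam, is_min_cut_value lam & dcut U <= alpha * lam.

Definition terminal_cut (S T X : {set V}) : bool :=
  is_cut X && (S \subset X) && (X \subset ~: T).

Definition unique_min_terminal_cut (S T X : {set V}) :=
  [/\ S != set0, T != set0, [disjoint S & T],
      terminal_cut S T X &
      forall Y, terminal_cut S T Y -> Y != X -> dcut X < dcut Y].
End Cuts.

(* Main.v *)
Require Import Defs.
From HB Require Import structures.
From mathcomp Require Import all_boot all_order all_algebra.
From mathcomp Require Import reals.
From mathcomp Require Import zify ring lra.
Import Order.TTheory GRing.Theory Num.Theory.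
Set Implicit Arguments. Unset Strict Implicit.

Lemma layer_sum k a b :
  \sum_(3 <= j < k.+1) ((j <= a) != (j <= b) : nat) =
  (minn (maxn a 2) (maxn k 2) - minn (maxn b 2) (maxn k 2)) +
  (minn (maxn b 2) (maxn k 2) - minn (maxn a 2) (maxn k 2)).
Proof.
elim: k => [|k IH]; first by rewrite big_geq //; lia.
case: (ltnP k 2) => hk.
  rewrite big_geq; last by lia.
  lia.
rewrite big_nat_recr /=; last by lia.
rewrite IH.
case: (leqP k.+1 a) => ha; case: (leqP k.+1 b) => hb /=; lia.
Qed.

Lemma ham_ge (I : finType) (T : {set I}) (a b : I -> bool) :
  (\sum_(t in T) (a t : nat) <= \sum_(t in T) (b t : nat) + \sum_(t in T) (a t != b t : nat))%N.
Proof.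
rewrite -big_split /=; apply: leq_sum => t _; by case: (a t); case: (b t).
Qed.

Lemma comb (I : finType) (T : {set I}) (a b : I -> bool) :
  (\sum_(t in T) ((a t && (\sum_(s in T) (a s : nat) == 1%N)) != (b t && (\sum_(s in T) (b s : nat) == 1%N)) : nat)
   + \sum_(3 <= j < #|T|.+1) ((j <= \sum_(s in T) (a s : nat)) != (j <= \sum_(s in T) (b s : nat)) : nat)
   <= \sum_(t in T) (a t != b t : nat))%N.
Proof.
set na := \sum_(s in T) (a s : nat). set nb := \sum_(s in T) (b s : nat).
have h1 := ham_ge T a b. have h2 := ham_ge T b a.
have e2 : \sum_(t in T) (b t != a t : nat) = \sum_(t in T) (a t != b t : nat).
  by apply: eq_bigr => t _; rewrite eq_sym.
rewrite e2 in h2.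
have hna : (na <= #|T|)%N.
  rewrite -sum1_card; apply: leq_sum => t _; by case: (a t).
have hnb : (nb <= #|T|)%N.
  rewrite -sum1_card; apply: leq_sum => t _; by case: (b t).
rewrite layer_sum.
rewrite -/na -/nb in h1 h2.
have [ha|ha] := eqVneq na 1%N; have [hb|hb] := eqVneq nb 1%N.
- rewrite (eq_bigr (fun t => (a t != b t : nat))); last by move=> t _; rewrite !andbT.
  rewrite ha hb; lia.
- rewrite (eq_bigr (fun t => (a t : nat))); last by move=> t _; rewrite !andbT andbF; case: (a t).
  rewrite -/na ha. rewrite ha in h1 h2. lia.
- rewrite (eq_bigr (fun t => (b t : nat))); last by move=> t _; rewrite !andbT andbF; case: (b t).
  rewrite -/nb hb. rewrite hb in h1 h2. lia.
- rewrite big1; last by move=> t _; rewrite !andbF.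
  lia.
Qed.

Local Open Scope ring_scope.
Lemma arith (F : realFieldType) (k : nat) (l d a : F) : 0 < l -> d <= a * l ->
  (2 <= k)%N ->
  (l + l) *+ k + (d + d) *+ (k.+1 - 3) <= (d + d) *+ k -> k%:R <= 2 * a.
Proof.
move=> lp hd k2 h.
rewrite subSS -[(l + l) *+ k]mulr_natl -[(d + d) *+ (k - 2)]mulr_natl in h.
rewrite -[(d + d) *+ k]mulr_natl (natrB _ k2) in h.
move: h; move: (k%:R : F) => kk h.
have h2 : kk * l <= 2 * d by lra.
have h3 : kk * l <= (2 * a) * l by lra.
by rewrite ler_pM2r in h3.
Qed.

Section Main.
Variables (R : realType) (V : finType) (e : rel V) (c : V -> V -> R).
Hypothesis esym : symmetric e.
Hypothesis csym : forall x y, c x y = c y x.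
Hypothesis cpos : forall x y, e x y -> 0 < c x y.

Definition om x y : R := if e x y then c x y else 0.
Lemma om_ge0 x y : 0 <= om x y.
Proof. rewrite /om; case: ifP => // /cpos/ltW //. Qed.
Lemma om_sym x y : om x y = om y x.
Proof. by rewrite /om esym csym. Qed.

Definition Q (P : {set V}) : R :=
  \sum_x \sum_y ((x \in P) != (y \in P))%:R * om x y.

Lemma dcutE P : dcut e c P = \sum_x \sum_y ((x \in P) && (y \notin P))%:R * om x y.
Proof.
rewrite /dcut big_mkcond /=; apply: eq_bigr => x _.
case: (x \in P) => /=.
- rewrite big_mkcond /=; apply: eq_bigr => y _; rewrite inE /om.
  by case: (y \in P); case: (e x y); rewrite /= ?mul1r ?mul0r.
- by rewrite big1 // => y _; rewrite mul0r.
Qed.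

Lemma QE P : Q P = dcut e c P + dcut e c P.
Proof.
rewrite dcutE /Q.
have -> : \sum_x \sum_y ((x \in P) != (y \in P))%:R * om x y =
  \sum_x \sum_y (((x \in P) && (y \notin P))%:R * om x y
                 + ((y \in P) && (x \notin P))%:R * om x y).
  apply: eq_bigr => x _; apply: eq_bigr => y _.
  by case: (x \in P); case: (y \in P); rewrite /= ?mul0r ?mul1r ?addr0 ?add0r.
under eq_bigr => x _ do rewrite big_split.
rewrite big_split /=; congr (_ + _).
rewrite exchange_big; apply: eq_bigr => x _; apply: eq_bigr => y _.
by rewrite om_sym.
Qed.

Lemma Qsum (I : Type) (r : seq I) (p : pred I) (F : I -> {set V}) :
  \sum_(i <- r | p i) Q (F i) =
  \sum_x \sum_y (\sum_(i <- r | p i) ((x \in F i) != (y \in F i) : nat))%:R * om x y.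
Proof.
rewrite /Q exchange_big; apply: eq_bigr => x _; rewrite exchange_big.
apply: eq_bigr => y _.
by rewrite natr_sum mulr_suml.
Qed.

Lemma Qmono (m1 m2 : V -> V -> nat) : (forall x y, (m1 x y <= m2 x y)%N) ->
  \sum_x \sum_y (m1 x y)%:R * om x y <= \sum_x \sum_y (m2 x y)%:R * om x y.
Proof.
move=> h; apply: ler_sum => x _; apply: ler_sum => y _.
by apply: ler_wpM2r; [exact: om_ge0 | rewrite ler_nat].
Qed.

Lemma notin_of_neqT (W : {set V}) : W != setT -> exists y, y \notin W.
Proof.
move=> WT; case: (pickP [pred y | y \notin W]) => [y hy | h]; first by exists y.
exfalso; move/negP: WT; apply; apply/eqP/setP => z; rewrite inE.
by move: (h z) => /= /negbFE.
Qed.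

Lemma cut_pos (W : {set V}) : connected_graph e -> is_cut W -> 0 < dcut e c W.
Proof.
move=> conn /andP[W0 WT].
case/set0Pn: W0 => x xW.
have [y yW] := notin_of_neqT WT.
have : [exists x', [exists y', [&& x' \in W, y' \notin W & e x' y']]].
  apply: contraT => /existsPn h.
  have h1 : forall a b, e a b -> a \in W -> b \in W.
    move=> a b eab aW; apply: contraT => bW.
    move: (h a) => /existsPn /(_ b).
    by rewrite aW bW eab.
  have cl : closed e W.
    move=> a b eab; apply/idP/idP; first exact: h1.
    by apply: h1; rewrite esym.
  move: (closed_connect cl (conn x y)).
  by rewrite xW (negbTE yW).
case/existsP => x' /existsP [y' /and3P [xW' yW' e']].
rewrite dcutE (bigD1 x') //= (bigD1 y') //= xW' yW' /= mul1r {1}/om e'.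
have h0 : forall a b, 0 <= ((a \in W) && (b \notin W))%:R * om a b.
  by move=> a b; apply: mulr_ge0; [exact: ler0n | exact: om_ge0].
have s1 : 0 <= \sum_(i | i != y') (i \notin W)%:R * om x' i.
  by apply: sumr_ge0 => z _; apply: mulr_ge0; [exact: ler0n | exact: om_ge0].
have s2 : 0 <= \sum_(i | i != x') \sum_y0 ((i \in W) && (y0 \notin W))%:R * om i y0.
  by apply: sumr_ge0 => z _; apply: sumr_ge0 => w _; exact: h0.
have := cpos e'.
lra.
Qed.


Lemma main_T (conn : connected_graph e) (alpha : R) (U : {set V}) :
  1 <= alpha -> approx_min_cut e c alpha U ->
  exists T : {set V},
    [/\ T \subset ~: U,
        (#|T|%:Z <= Num.floor (2 * alpha) + 1)%R &
        unique_min_terminal_cut e c U T U].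
Proof.
move=> halpha [Ucut [lam [[W0 W0cut dW0] lammin] hdU]].
have lampos : 0 < lam by rewrite -dW0; apply: cut_pos.
move: (Ucut) => /andP [U0 UT].
pose valid := fun T : {set V} => [&& T \subset ~: U, T != set0 &
   [forall W : {set V}, [&& W \subset ~: U, W :&: T == set0 & W != set0] ==>
      (dcut e c U < dcut e c (U :|: W))]].
have vUc : valid (~: U).
  rewrite /valid subxx /=; apply/andP; split.
    have [y yU] := notin_of_neqT UT.
    by apply/set0Pn; exists y; rewrite inE.
  apply/forallP => W; apply/implyP => /and3P [sW dW nW].
  exfalso; case/set0Pn: nW => z zW.
  have zU := subsetP sW z zW.
  rewrite inE in zU; by move: dW => /eqP /setP /(_ z); rewrite !inE zW zU.
have [T minT sT] := minset_exists vUc.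
have vT := minsetp minT.
move: (vT) => /and3P [sTU TN0 /forallP allW].
have uniq : unique_min_terminal_cut e c U T U.
  split => //.
  - rewrite -setI_eq0; apply/eqP/setP => z; rewrite !inE.
    apply/negP => /andP [zU zT]; have := subsetP sTU z zT; by rewrite inE zU.
  - rewrite /terminal_cut Ucut subxx /=; apply/subsetP => z zU; rewrite inE.
    apply/negP => zT; have := subsetP sTU z zT; by rewrite inE zU.
  - move=> Y /andP [/andP [Ycut sUY] sYT] YU.
    have eqY : U :|: (Y :\: U) = Y.
      apply/setP => z; rewrite !inE; case zU: (z \in U) => //=.
      by rewrite (subsetP sUY z zU).
    rewrite -eqY; move: (allW (Y :\: U)) => /implyP; apply.
    apply/and3P; split.
    + by apply/subsetP => z; rewrite !inE => /andP [].
    + apply/eqP/setP => z; rewrite !inE; apply/negP => /andP [/andP [_ zY] zT].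
      by have := subsetP sYT z zY; rewrite inE zT.
    + apply: contra YU; rewrite setD_eq0 => sYU.
      by rewrite eqEsubset sYU sUY.
exists T; split => //.
case: (leqP #|T| 1) => hk.
  have : (0 <= Num.floor (2 * alpha))%R.
    by rewrite floor_ge_int /=; lra.
  move=> h0.
  have : (#|T|%:Z <= 1)%R by rewrite lez_nat.
  move=> h1; move: h0 h1; move: (Num.floor _) => f; move: #|T| => k'.
  clear; lia.
suff kb : (#|T|%:R <= 2 * alpha :> R).
  have : (#|T|%:Z <= Num.floor (2 * alpha))%R by rewrite floor_ge_int.
  move: (Num.floor _) => f; move: #|T| => k'.
  clear; lia.
pose wit := fun (t : V) (W : {set V}) => [&& W \subset ~: U, W :&: T == [set t] &
   dcut e c (U :|: W) <= dcut e c U].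
have exW : forall t, t \in T -> exists W, wit t W.
  move=> t tT.
  have nv : ~~ valid (T :\ t).
    apply/negP => v'.
    have eq := minsetinf minT v' (subD1set T t).
    by move: tT; rewrite -{1}eq setD11.
  have s1 : T :\ t \subset ~: U by apply: subset_trans (subD1set T t) sTU.
  have n1 : T :\ t != set0.
    rewrite -cards_eq0; move: (cardsD1 t T); rewrite tT /= => hc.
    move: hk hc; clear; lia.
  move: nv; rewrite /valid s1 n1 /= => /forallPn [W].
  rewrite negb_imply => /andP [/and3P [sW dW nW] nlt].
  rewrite -leNgt in nlt.
  exists W; rewrite /wit sW nlt andbT /=.
  have : W :&: T != set0.
    apply/negP => dWT; move: (allW W); rewrite sW dWT nW /= => hlt.
    by move: nlt; rewrite leNgt hlt.
  case/set0Pn => s; rewrite inE => /andP [sW' sT'].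
  have st : s = t.
    apply/eqP; apply: contraT => st.
    by move: dW => /eqP /setP /(_ s); rewrite !inE st sW' sT'.
  subst s.
  apply/eqP/setP => z; rewrite !inE.
  case: (eqVneq z t) => [-> | zt] /=; first by rewrite sW' sT'.
  by apply/negP => /andP [zW zT]; move: dW => /eqP /setP /(_ z); rewrite !inE zt zW zT.
pose Wf := fun t => odflt set0 [pick W | wit t W].
have hWf : forall t, t \in T -> wit t (Wf t).
  move=> t tT; rewrite /Wf; case: pickP => [W //|h].
  by have [W hw] := exW t tT; rewrite h in hw.
pose X := fun t => U :|: Wf t.
pose n := fun v => \sum_(s in T) (v \in X s : nat).
pose B := fun t => [set v | (v \in X t) && (n v == 1%N)].
pose H := fun j => [set v | (j <= n v)%N].
have nU : forall v, v \in U -> n v = #|T|.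
  move=> v vU; rewrite /n -sum1_card; apply: eq_bigr => s _.
  by rewrite /X inE vU.
have memW : forall s t, s \in T -> t \in T -> (t \in Wf s) = (t == s).
  move=> s t sT' tT; move: (hWf s sT') => /and3P [_ /eqP hI _].
  by move: hI => /setP /(_ t); rewrite !inE tT andbT.
have tnU : forall t, t \in T -> t \notin U.
  by move=> t tT; have := subsetP sTU t tT; rewrite inE.
have nt : forall t, t \in T -> n t = 1%N.
  move=> t tT; rewrite /n (bigD1 t) //= big1 /=.
    by rewrite /X inE (negbTE (tnU t tT)) /= memW // eqxx.
  move=> s /andP [sT' st].
  by rewrite /X inE (negbTE (tnU t tT)) /= memW // eq_sym (negbTE st).
have [u uU] : exists u, u \in U by apply/set0Pn.
have hB : forall t, t \in T -> lam <= dcut e c (B t).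
  move=> t tT; apply: lammin; apply/andP; split.
    apply/set0Pn; exists t; rewrite inE nt // eqxx andbT.
    by rewrite /X inE memW // eqxx orbT.
  apply/negP => /eqP hBT.
  have : u \in B t by rewrite hBT inE.
  rewrite inE nU // => /andP [_ /eqP hk1]; move: hk hk1; clear; lia.
have hH : forall j, (3 <= j)%N -> (j <= #|T|)%N -> dcut e c U <= dcut e c (H j).
  move=> j j3 jk.
  have sUH : U \subset H j by apply/subsetP => v vU; rewrite inE nU.
  have eqH : U :|: (H j :\: U) = H j.
    apply/setP => z; rewrite !inE; case zU: (z \in U) => //=.
    by rewrite nU // jk.
  case: (eqVneq (H j :\: U) set0) => hE.
    have : H j = U.
      by apply/eqP; rewrite eqEsubset sUH andbT -setD_eq0 hE.
    by move=> ->.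
  rewrite -eqH; apply/ltW; move: (allW (H j :\: U)) => /implyP; apply.
  apply/and3P; split => //.
    by apply/subsetP => z; rewrite !inE => /andP [].
  apply/eqP/setP => z; rewrite !inE; apply/negP => /andP [/andP [_ zH] zT].
  by move: zH j3; rewrite nt //; clear; lia.
have hX : forall t, t \in T -> dcut e c (X t) <= dcut e c U.
  by move=> t tT; case/and3P: (hWf t tT).
set dU := dcut e c U.
have ineq : \sum_(t in T) Q (B t) + \sum_(3 <= j < #|T|.+1) Q (H j)
            <= \sum_(t in T) Q (X t).
  rewrite !Qsum -big_split /=.
  under eq_bigr => x _ do rewrite -big_split /=.
  apply: (le_trans _ (Qmono (m1 := fun x y =>
     (\sum_(t in T) ((x \in B t) != (y \in B t)) +
      \sum_(3 <= j < #|T|.+1) ((x \in H j) != (y \in H j)))%N) _)).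
    apply: ler_sum => x _; apply: ler_sum => y _.
    by rewrite -mulrDl natrD.
  move=> x y.
  have := comb T (fun t => x \in X t) (fun t => y \in X t).
  have e1 : \sum_(t in T) ((x \in B t) != (y \in B t) : nat) =
    \sum_(t in T) (((x \in X t) && (\sum_(s in T) (x \in X s : nat) == 1%N)) !=
                   ((y \in X t) && (\sum_(s in T) (y \in X s : nat) == 1%N)) : nat).
    by apply: eq_bigr => t _; rewrite !inE.
  have e2 : \sum_(3 <= j < #|T|.+1) ((x \in H j) != (y \in H j) : nat) =
    \sum_(3 <= j < #|T|.+1) ((j <= \sum_(s in T) (x \in X s : nat))%N !=
                              (j <= \sum_(s in T) (y \in X s : nat))%N : nat).
    by apply: eq_bigr => j _; rewrite !inE.
  by rewrite e1 e2.
have lB : \sum_(t in T) (lam + lam) <= \sum_(t in T) Q (B t).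
  by apply: ler_sum => t tT; rewrite QE; have hh := hB t tT; exact (lerD hh hh).
have lH : \sum_(3 <= j < #|T|.+1) (dU + dU) <= \sum_(3 <= j < #|T|.+1) Q (H j).
  rewrite big_nat_cond [X in _ <= X]big_nat_cond.
  apply: ler_sum => j /andP [/andP [j3 jk] _]; rewrite QE.
  have hh := hH j j3 jk; exact (lerD hh hh).
have lX : \sum_(t in T) Q (X t) <= \sum_(t in T) (dU + dU).
  by apply: ler_sum => t tT; rewrite QE; have hh := hX t tT; exact (lerD hh hh).
rewrite !sumr_const sumr_const_nat in lB lH lX.
have htot := le_trans (lerD lB lH) (le_trans ineq lX).
exact: arith lampos hdU hk htot.
Qed.

End Main.


Unset Implicit Arguments.

Theorem corollary2p4 (R : realType) (V : finType) (e : rel V) (c : V -> V -> R)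
  (alpha : R) (U : {set V}) :
  simple_graph e -> positive_costs e c -> connected_graph e ->
  1 <= alpha -> approx_min_cut e c alpha U ->
  exists T : {set V},
    [/\ T \subset ~: U,
        (#|T|%:Z <= Num.floor (2 * alpha) + 1)%R &
        unique_min_terminal_cut e c U T U].
Proof.
move=> [esym _] [csym cpos] conn halpha hU.
exact: (main_T esym csym cpos conn halpha hU).
Qed.
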